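(* Let $C>0$ and let $\Psi_{\mathrm{ENO}}:\mathbb{R}\to\mathbb{R}$ be $\Psi_{\mathrm{ENO}}(r)=1$ if $|r|\ge 1$ and $\Psi_{\mathrm{ENO}}(r)=r$ if $|r|\le 1$. Fix indices $i,n$ and real numbers $Q_i^{n-2},Q_i^{n-1},Q_i^n,Q_i^{n+1},Q_{i-1}^n$ satisfying $$Q_i^n + \tfrac12\Psi_{\mathrm{ENO}}(r_i^n)\,(Q_i^{n+1}-Q_i^n) + C\,Q_i^n = Q_i^{n-1} + \tfrac12\Psi_{\mathrm{ENO}}(r_i^{n-1})\,(Q_i^{n}-Q_i^{n-1}) + C\,Q_{i-1}^n,$$ where $r_i^n = \frac{Q_i^n-Q_i^{n-1}}{Q_i^{n+1}-Q_i^n}$ and $r_i^{n-1}=\frac{Q_i^{n-1}-Q_i^{n-2}}{Q_i^{n}-Q_i^{n-1}}$, with the convention that a product $\Psi_{\mathrm{ENO}}(r)\cdot(\text{denominator of } r)$ is $0$ whenever that denominator vanishes. Then $$\min\{Q_i^{n-1},Q_{i-1}^n\}\le Q_i^n\le \max\{Q_i^{n-1},Q_{i-1}^n\}.$$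
   Context: This is the (fully implicit, four time levels) scheme for $\kappa\partial_tq+v\partial_xq=0$ obtained from the time approximation $\tau\partial_tq_i^n\approx Q_i^n-Q_i^{n-1}+\frac{1-w}{2}(Q_i^{n+1}-2Q_i^n+Q_i^{n-1})+\frac{w}{2}(Q_i^n-2Q_i^{n-1}+Q_i^{n-2})$ with a solution-dependent ENO weight $w\in\{0,1\}$ ($w=0$ if $|r_i^n|\ge1$, $w=1$ if $|r_i^n|\le1$), written via $\psi=1-w+wr$; $C=C_i^n=v^n\tau/(\kappa h_i)$ is the local Courant number. *)

(* Defs.v *)
From HB Require Import structures.
From mathcomp Require Import all_boot all_order all_algebra.
Set Implicit Arguments. Unset Strict Implicit. Unset Printing Implicit Defensive.
Import Order.TTheory GRing.Theory Num.Theory.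
Local Open Scope ring_scope.

(* Psi is an ENO limiter: Psi r = 1 if |r| >= 1 and Psi r = r if |r| <= 1.
   At r = -1 the two clauses of the informal definition disagree (1 vs -1);
   we accept either value (the ENO weight w in {0,1} may be chosen either way
   when |r| = 1), so the spec is stated clause-wise as a disjunction. *)
Definition is_psi_eno (R : realFieldType) (Psi : R -> R) : Prop :=
  forall r : R, (1 <= `|r| /\ Psi r = 1) \/ (`|r| <= 1 /\ Psi r = r).

Definition psi_times (R : realFieldType) (Psi : R -> R) (num den : R) : R :=
  if den == 0 then 0 else Psi (num / den) * den.

(* Main.v *)
Require Import Defs.
From HB Require Import structures.
From mathcomp Require Import all_boot all_order all_algebra.
From mathcomp Require Import ring lra.
Import Order.TTheory GRing.Theory Num.Theory.
Local Open Scope ring_scope.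

Lemma psi_bound (R : realFieldType) (Psi : R -> R) num den :
  is_psi_eno Psi ->
  `|psi_times Psi num den| <= `|num| /\ `|psi_times Psi num den| <= `|den|.
Proof.
move=> HP; rewrite /psi_times; case: eqP => [->|/eqP dn0].
  by rewrite normr0 !normr_ge0.
have hd : 0 < `|den| by rewrite normr_gt0.
case: (HP (num / den)) => [[h1 ->]|[h1 ->]].
  rewrite mul1r; split=> //; rewrite normrM normfV in h1.
  by rewrite (ler_pdivlMr _ _ hd) mul1r in h1.
rewrite divfK //; split=> //.
rewrite normrM normfV in h1.
by rewrite (ler_pdivrMr _ _ hd) mul1r in h1.
Qed.

Lemma prod_lb (R : realFieldType) (d a : R) : `|a| <= `|d| -> - (d * d) <= d * a.
Proof.
move=> h; rewrite lerNl.
apply: (le_trans (ler_norm _)); rewrite normrN normrM.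
apply: (le_trans (ler_wpM2l (normr_ge0 d) h)).
by rewrite -normrM ger0_norm // -expr2 sqr_ge0.
Qed.

Theorem mainTheorem2 (R : realFieldType) (Psi : R -> R) (C qm2 qm1 q qp1 ql : R) :
  is_psi_eno Psi -> 0 < C ->
  q + 2^-1 * psi_times Psi (q - qm1) (qp1 - q) + C * q
    = qm1 + 2^-1 * psi_times Psi (qm1 - qm2) (q - qm1) + C * ql ->
  Num.min qm1 ql <= q <= Num.max qm1 ql.
Proof.
move=> HP HC.
set a := psi_times Psi (q - qm1) (qp1 - q).
set b := psi_times Psi (qm1 - qm2) (q - qm1).
move=> E.
have [ha _] := @psi_bound R Psi (q - qm1) (qp1 - q) HP.
have [_ hb] := @psi_bound R Psi (qm1 - qm2) (q - qm1) HP.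
have h1 := @prod_lb R (q - qm1) a ha.
have h2 : - ((q - qm1) * (q - qm1)) <= (q - qm1) * (- b).
  by apply: (@prod_lb R); rewrite normrN.
have key : 0 <= (q - qm1) * (ql - q) * C.
  have H : (ql - q) * C = q - qm1 + 2^-1 * a - 2^-1 * b.
    rewrite mulrBl [ql * C]mulrC [q * C]mulrC; lra.
  rewrite -mulrA H.
  lra.
have k2 : 0 <= (q - qm1) * (ql - q) by rewrite -(pmulr_lge0 _ HC).
case: (leP qm1 ql) => hle.
  apply/andP; split; nra.
apply/andP; split; nra.
Qed.
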